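(* Let $\mathsf{A}\subset GL_2(\mathbb{R})$ with $\mathscr{R}(\mathsf{A})\neq\emptyset$ be such that $\mathcal{S}(\mathsf{A})$ is almost multiplicative. Then $\mathcal{S}(\mathsf{A})$ does not contain parabolic elements and $\mathscr{R}(\mathsf{A})$ does not contain nilpotent elements.
   Context: $\|\cdot\|$ is the operator norm. $\mathcal{S}(\mathsf{A})$ is the semigroup of finite products of elements of $\mathsf{A}$; $\mathscr{S}(\mathsf{A})=\overline{\mathbb{R}\mathcal{S}(\mathsf{A})}\subset M_2(\mathbb{R})$; $\mathscr{R}(\mathsf{A})=\{A\in\mathscr{S}(\mathsf{A}):\operatorname{rank}(A)=1\}$. A semigroup $\mathcal{S}$ is almost multiplicative if there is $\kappa>0$ with $\|AB\|\ge\kappa\|A\|\|B\|$ for all $A,B\in\mathcal{S}$. A matrix is parabolic if it has only one eigenspace (its single eigenvalue has geometric multiplicity one). *)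

(* Defs.v *)
From HB Require Import structures.
From mathcomp Require Import all_boot all_order all_algebra.
From mathcomp Require Import all_classical all_reals all_analysis.
Set Implicit Arguments. Unset Strict Implicit. Unset Printing Implicit Defensive.
Import Order.TTheory GRing.Theory Num.Theory.
Local Open Scope classical_set_scope.
Local Open Scope ring_scope.

Section Defs.
Variable R : realType.

Definition euclid (v : 'cV[R]_2) : R := Num.sqrt (\sum_i (v i ord0) ^+ 2).

Definition opnorm (M : 'M[R]_2) : R :=
  sup [set euclid (M *m v) | v in [set v : 'cV[R]_2 | euclid v = 1]].

Definition semigroup_gen (A : set 'M[R]_2) : set 'M[R]_2 :=
  [set M | exists s : seq 'M[R]_2,
     [/\ s != [::], (forall x, x \in s -> A x) & M = \prod_(x <- s) x]].

Definition scrS (A : set 'M[R]_2) : set 'M[R]_2 :=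
  closure ([set c *: M | c in [set: R] & M in semigroup_gen A]
           : set ('M[R]_(2, 2) : normedModType R)).

Definition scrR (A : set 'M[R]_2) : set 'M[R]_2 :=
  [set M | scrS A M /\ \rank M = 1%N].

Definition almost_multiplicative (S : set 'M[R]_2) : Prop :=
  exists kappa : R, 0 < kappa /\
    forall M N, S M -> S N -> opnorm (M * N) >= kappa * opnorm M * opnorm N.

Definition parabolic (M : 'M[R]_2) : Prop :=
  exists lam : R, [/\ eigenvalue M lam,
                     (forall mu, eigenvalue M mu -> mu = lam) &
                     \rank (eigenspace M lam) = 1%N].

Definition nilpotent (M : 'M[R]_2) : Prop := exists n : nat, M ^+ n = 0.
End Defs.

(* Main.v *)
Require Import Defs.
From HB Require Import structures.
From mathcomp Require Import all_boot all_order all_algebra.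
From mathcomp Require Import all_classical all_reals all_analysis.
From mathcomp Require Import ring lra.
Import Order.TTheory GRing.Theory Num.Theory.
Local Open Scope classical_set_scope.
Local Open Scope ring_scope.

Section S.
Variable R : realType.
Implicit Types X Y : 'M[R]_2.
Notation i0 := (@ord0 1).
Notation i1 := (@ord_max 1).

Lemma ord2P (i : 'I_2) : i = i0 \/ i = i1.
Proof. case: i => [[|[|k]] Hk]; [left|right|by []]; exact: val_inj. Qed.

Lemma sum2 (F : 'I_2 -> R) : \sum_i F i = F i0 + F i1.
Proof. rewrite !big_ord_recl big_ord0 addr0; congr (_ + F _); exact: val_inj. Qed.

Lemma mulE X Y i j : (X * Y) i j = X i i0 * Y i0 j + X i i1 * Y i1 j.
Proof. by rewrite -mulmxE mxE sum2. Qed.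

Definition e X := `|X i0 i0| + `|X i0 i1| + `|X i1 i0| + `|X i1 i1|.

Lemma e_ge0 X : 0 <= e X.
Proof. by rewrite /e !addr_ge0. Qed.

Lemma eZ c X : e (c *: X) = `|c| * e X.
Proof. by rewrite /e !mxE !normrM; ring. Qed.

Lemma eD X Y : e (X + Y) <= e X + e Y.
Proof.
rewrite /e !mxE.
have := ler_normD (X i0 i0) (Y i0 i0); have := ler_normD (X i0 i1) (Y i0 i1);
have := ler_normD (X i1 i0) (Y i1 i0); have := ler_normD (X i1 i1) (Y i1 i1).
lra.
Qed.

Lemma eN X : e (- X) = e X.
Proof. by rewrite /e !mxE !normrN. Qed.

Lemma eM X Y : e (X * Y) <= e X * e Y.
Proof.
rewrite /e !mulE.
set a := X i0 i0; set b := X i0 i1; set c := X i1 i0; set d := X i1 i1.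
set p := Y i0 i0; set q := Y i0 i1; set r := Y i1 i0; set s := Y i1 i1.
have H : forall u v w z : R, `|u * v + w * z| <= `|u| * `|v| + `|w| * `|z|.
  by move=> u v w z; rewrite -!normrM; apply: ler_normD.
have := H a p b r; have := H a q b s; have := H c p d r; have := H c q d s.
have := normr_ge0 a; have := normr_ge0 b; have := normr_ge0 c; have := normr_ge0 d.
have := normr_ge0 p; have := normr_ge0 q; have := normr_ge0 r; have := normr_ge0 s.
nra.
Qed.

Lemma e_eq0 X : e X = 0 -> X = 0.
Proof.
rewrite /e => H; have := normr_ge0 (X i0 i0); have := normr_ge0 (X i0 i1);
have := normr_ge0 (X i1 i0); have := normr_ge0 (X i1 i1) => h1 h2 h3 h4.
apply/matrixP => i j; rewrite mxE; apply/eqP; rewrite -normr_eq0.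
by case: (ord2P i) => ->; case: (ord2P j) => ->; apply/eqP; lra.
Qed.

Lemma e_scalar (l : R) : e l%:M = `|l| *+ 2.
Proof. by rewrite /e !mxE /= !mulr1n !mulr0n normr0; ring. Qed.


Lemma nK (x : R) : `|x| ^+ 2 = x ^+ 2.
Proof. exact: real_normK (num_real x). Qed.

Lemma mulvE X (v : 'cV[R]_2) i : (X *m v) i ord0 = X i i0 * v i0 ord0 + X i i1 * v i1 ord0.
Proof. by rewrite mxE sum2. Qed.

Lemma euclidE (v : 'cV[R]_2) : euclid v = Num.sqrt (v i0 ord0 ^+ 2 + v i1 ord0 ^+ 2).
Proof. by rewrite /euclid sum2. Qed.

Lemma euclid_le (v : 'cV[R]_2) : euclid v <= `|v i0 ord0| + `|v i1 ord0|.
Proof.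
rewrite euclidE -[X in _ <= X]ger0_norm ?addr_ge0 // -sqrtr_sqr ler_sqrt ?sqr_ge0 //.
have := normr_ge0 (v i0 ord0); have := normr_ge0 (v i1 ord0).
rewrite -(nK (v i0 ord0)) -(nK (v i1 ord0)).
nra.
Qed.

Lemma euclid_ge (v : 'cV[R]_2) i : `|v i ord0| <= euclid v.
Proof.
rewrite euclidE -sqrtr_sqr ler_sqrt ?addr_ge0 ?sqr_ge0 //.
by case: (ord2P i) => ->; rewrite ?lerDl ?lerDr sqr_ge0.
Qed.

Lemma euclid1 (v : 'cV[R]_2) : euclid v = 1 -> `|v i0 ord0| <= 1 /\ `|v i1 ord0| <= 1.
Proof.
rewrite euclidE => H.
have H2 : v i0 ord0 ^+ 2 + v i1 ord0 ^+ 2 = 1.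
  by rewrite -[LHS]sqr_sqrtr ?addr_ge0 ?sqr_ge0 // H expr1n.
have := sqr_ge0 (v i0 ord0); have := sqr_ge0 (v i1 ord0).
rewrite -(nK (v i0 ord0)) -(nK (v i1 ord0)) in H2 *.
have := normr_ge0 (v i0 ord0); have := normr_ge0 (v i1 ord0).
split; nra.
Qed.

Definition unitv (j : 'I_2) : 'cV[R]_2 := delta_mx j ord0.

Lemma euclid_unitv j : euclid (unitv j) = 1.
Proof.
rewrite euclidE !mxE /=; case: (ord2P j) => -> /=; rewrite ?eqxx /=;
  by rewrite expr0n /= ?add0r ?addr0 expr1n sqrtr1.
Qed.

Lemma mul_unitv X i j : (X *m unitv j) i ord0 = X i j.
Proof.
rewrite mulvE !mxE /=; case: (ord2P j) => -> /=; rewrite ?eqxx /=;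
  by rewrite ?mulr0 ?mulr1 ?addr0 ?add0r.
Qed.

Lemma opnorm_le X : opnorm X <= e X.
Proof.
apply: ge_sup; first by exists (euclid (X *m unitv i0)); exists (unitv i0) => //; exact: euclid_unitv.
move=> _ [v /= /euclid1 [h0 h1] <-].
apply: le_trans (euclid_le _) _; rewrite !mulvE /e.
have H : forall a b c d : R, `|c| <= 1 -> `|d| <= 1 -> `|a * c + b * d| <= `|a| + `|b|.
  move=> a b c d hc hd; apply: le_trans (ler_normD _ _) _; rewrite !normrM.
  apply: lerD; rewrite -[X in _ <= X]mulr1; apply: ler_wpM2l => //.
have := H (X i0 i0) (X i0 i1) _ _ h0 h1; have := H (X i1 i0) (X i1 i1) _ _ h0 h1.
lra.
Qed.

Lemma opnorm_ge X i j : `|X i j| <= opnorm X.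
Proof.
have ub : has_ubound [set euclid (X *m v) | v in [set v : 'cV[R]_2 | euclid v = 1]].
  exists (e X) => _ [v /= /euclid1 [h0 h1] <-].
  apply: le_trans (euclid_le _) _; rewrite !mulvE /e.
  have H : forall a b c d : R, `|c| <= 1 -> `|d| <= 1 -> `|a * c + b * d| <= `|a| + `|b|.
    move=> a b c d hc hd; apply: le_trans (ler_normD _ _) _; rewrite !normrM.
    apply: lerD; rewrite -[X in _ <= X]mulr1; apply: ler_wpM2l => //.
  have := H (X i0 i0) (X i0 i1) _ _ h0 h1; have := H (X i1 i0) (X i1 i1) _ _ h0 h1.
  lra.
apply: le_trans (ub_le_sup ub _); last by exists (unitv j) => //; exact: euclid_unitv.
by rewrite -mul_unitv; apply: euclid_ge.
Qed.

Lemma e_le_opnorm X : e X <= 4%:R * opnorm X.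
Proof.
rewrite /e; have := opnorm_ge X i0 i0; have := opnorm_ge X i0 i1;
have := opnorm_ge X i1 i0; have := opnorm_ge X i1 i1; lra.
Qed.


Lemma det2 X : \det X = X i0 i0 * X i1 i1 - X i0 i1 * X i1 i0.
Proof.
rewrite (expand_det_row _ i0) sum2 /cofactor !det_mx11 !mxE /=.
have -> : lift i0 0 = i1 by apply: val_inj.
have -> : lift i1 0 = i0 by apply: val_inj.
rewrite expr0 expr1 !mul1r; ring.
Qed.

Lemma eig_det X mu : eigenvalue X mu = (\det (X - mu%:M) == 0).
Proof. by rewrite /eigenvalue /eigenspace kermx_eq0 row_free_unit unitmxE unitfE negbK. Qed.

Lemma entries_eq X Y : X i0 i0 = Y i0 i0 -> X i0 i1 = Y i0 i1 -> X i1 i0 = Y i1 i0 ->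
  X i1 i1 = Y i1 i1 -> X = Y.
Proof.
move=> h1 h2 h3 h4; apply/matrixP => i j.
by case: (ord2P i) => ->; case: (ord2P j) => ->.
Qed.

Lemma parabolic_split X : parabolic X ->
  exists lam B, [/\ X = lam%:M + B, B != 0 & B * B = 0].
Proof.
case=> lam [ev uniq rk].
set B := X - lam%:M.
have rB : \rank B = 1%N.
  move: rk; rewrite /eigenspace mxrank_ker -/B.
  have := rank_leq_row B; case: (\rank B) => [|[|]] //.
have Bn0 : B != 0 by rewrite -mxrank_eq0 rB.
move: ev; rewrite eig_det -/B det2 => /eqP dB.
set t := B i0 i0 + B i1 i1.
have ev2 : eigenvalue X (lam + t).
  rewrite eig_det det2 !mxE /=.
  move: dB; rewrite /B /t !mxE /= => dB.
  rewrite !mulr1n !mulr0n in dB *; apply/eqP; apply: etrans dB; ring.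
have t0 : t = 0.
  by have := uniq _ ev2 => /eqP; rewrite -subr_eq0 addrAC subrr add0r => /eqP.
exists lam, B; split => //; first by rewrite /B addrC subrK.
have hd : B i1 i1 = - B i0 i0 by apply/eqP; rewrite -subr_eq0 opprK addrC; apply/eqP.
clearbody t B; apply: entries_eq; rewrite !mulE !mxE; rewrite hd in dB *; nra.
Qed.

Lemma nil_split X : \rank X = 1%N -> nilpotent X -> X != 0 /\ X * X = 0.
Proof.
move=> rX [n Hn].
have Xn0 : X != 0 by rewrite -mxrank_eq0 rX.
have dX : \det X = 0.
  apply/eqP; rewrite -[_ == 0]negbK -unitfE -unitmxE; apply/negP => /mxrank_unit.
  by rewrite rX.
set t := X i0 i0 + X i1 i1.
have XX : X * X = t *: X.
  move: dX; rewrite det2 => dX.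
  apply: entries_eq; rewrite !mulE !mxE /t; nra.
have Xk : forall k, X ^+ k.+1 = t ^+ k *: X.
  elim=> [|k IH]; first by rewrite expr1 expr0 scale1r.
  by rewrite exprS IH -scalerAr XX scalerA -exprSr.
split => //.
case: n Hn => [|k]; first by rewrite expr0 => /eqP; rewrite oner_eq0.
rewrite Xk => /eqP; rewrite scaler_eq0 (negbTE Xn0) orbF expf_eq0 => /andP [_ /eqP t0].
by rewrite XX t0 scale0r.
Qed.


Lemma sg_mul (A : set 'M[R]_2) X Y : semigroup_gen A X -> semigroup_gen A Y ->
  semigroup_gen A (X * Y).
Proof.
move=> [s [sn sA ->]] [t [tn tA ->]]; exists (s ++ t); split.
- by case: s sn {sA}.
- by move=> x; rewrite mem_cat => /orP [] ?; [apply: sA | apply: tA].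
- by rewrite big_cat.
Qed.

Lemma sg_pow (A : set 'M[R]_2) X n : semigroup_gen A X -> semigroup_gen A (X ^+ n.+1).
Proof.
move=> hX; elim: n => [|n IH]; first by rewrite expr1.
by rewrite exprSr; apply: sg_mul.
Qed.

Lemma opnorm_ge0 X : 0 <= opnorm X.
Proof. exact: le_trans (normr_ge0 _) (opnorm_ge X i0 i0). Qed.

Lemma am_e (A : set 'M[R]_2) : almost_multiplicative (semigroup_gen A) ->
  exists k, 0 < k /\ forall P Q, semigroup_gen A P -> semigroup_gen A Q ->
    k * (e P * e Q) <= e (P * Q).
Proof.
move=> [ka [ka0 H]]; exists (ka / 16%:R); split; first by rewrite divr_gt0 // ltr0n.
move=> P Q hP hQ; apply: le_trans (opnorm_le _).
apply: le_trans (H _ _ hP hQ).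
have h1 : e P * e Q <= (4%:R * opnorm P) * (4%:R * opnorm Q).
  by apply: ler_pM; rewrite ?e_ge0 ?e_le_opnorm.
rewrite -mulrA; have := opnorm_ge0 P; have := opnorm_ge0 Q; nra.
Qed.

Lemma powM (lam : R) (B : 'M[R]_2) n : B * B = 0 ->
  (lam%:M + B) ^+ n.+1 = lam ^+ n *: (lam%:M + n.+1%:R *: B).
Proof.
move=> BB; elim: n => [|n IH]; first by rewrite expr1 expr0 scale1r scale1r.
rewrite exprSr IH -scalerAl.
have E : (lam%:M + n.+1%:R *: B) * (lam%:M + B) =
    lam *: (lam%:M + n.+2%:R *: B) + n.+1%:R *: (B * B).
  by apply: entries_eq; rewrite !mulE !mxE /= !mulr1n !mulr0n !mulrS; rewrite ?sum2; ring.
by rewrite E BB scaler0 addr0 scalerA -exprSr.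
Qed.


Lemma num_contra (k L x E1 E2 : R) : 0 < k -> 0 < L -> 4%:R * L + 10%:R * L / k < x ->
  x - 2%:R * L <= E1 -> E2 <= 2%:R * L + 2%:R * x -> k * (E1 * E1) <= L * E2 -> False.
Proof.
move=> k0 L0 hx h1 h2 h3.
have hkx : 4%:R * L * k + 10%:R * L < k * x.
  move: hx; rewrite -(ltr_pM2l k0) mulrDr => hx; apply: le_lt_trans hx.
  by rewrite mulrC [k * (_ / k)]mulrC divfK ?gt_eqF.
set y := x - 2%:R * L in h1 *.
have y2 : 2%:R * L <= y.
  rewrite /y lerBrDr; apply: ltW; apply: le_lt_trans hx.
  have : 0 <= 10%:R * L / k by rewrite divr_ge0 // ?mulr_ge0 // ltW.
  lra.
have ky : 10%:R * L < k * y by rewrite /y; nra.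
have kL : 0 < k * L := mulr_gt0 k0 L0.
have hE : y * y <= E1 * E1 by apply: ler_pM; lra.
have : k * (y * y) <= L * (2%:R * L + 2%:R * x) by nra.
rewrite /y in ky hE y2 *; nra.
Qed.

Lemma scalar0 : (0 : R)%:M = 0 :> 'M[R]_2.
Proof. by apply/matrixP => i j; rewrite !mxE mul0rn. Qed.

Lemma e0 : e (0 : 'M[R]_2) = 0.
Proof. by rewrite /e !mxE normr0 !addr0. Qed.

Lemma e_gt0 X : X != 0 -> 0 < e X.
Proof. by move=> h; rewrite lt_def e_ge0 andbT; apply: contra h => /eqP/e_eq0 ->. Qed.

Lemma part1 (A : set 'M[R]_2) X : almost_multiplicative (semigroup_gen A) ->
  semigroup_gen A X -> ~ parabolic X.
Proof.
move=> am hX /parabolic_split [lam [B [XB Bn0 BB]]].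
have [k [k0 Hk]] := @am_e A am.
have eB := @e_gt0 B Bn0.
have [l0|l0] := eqVneq lam 0.
  have := Hk _ _ hX hX; rewrite XB l0 scalar0 add0r BB e0; move=> H; have := mulr_gt0 k0 (mulr_gt0 eB eB); lra.
have L0 : 0 < `|lam| by rewrite normr_gt0.
set L := `|lam| in L0.
set C := (4%:R * L + 10%:R * L / k) / e B.
have C0 : 0 <= C by rewrite divr_ge0 ?e_ge0 // addr_ge0 ?divr_ge0 ?mulr_ge0 // ltW.
have hn := archi_boundP C0; set n := Num.Def.archi_bound C in hn.
have hn1 : C < n.+1%:R by apply: lt_le_trans hn _; rewrite ler_nat.
have := Hk _ _ (@sg_pow A X n hX) (@sg_pow A X n hX).
rewrite -exprD addSn addnS XB !powM // !eZ !normrX -/L.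
set E1 := e _; set E2 := e _.
have h1 : n.+1%:R * e B - 2%:R * L <= E1.
  have : e (n.+1%:R *: B) <= E1 + e (- lam%:M).
    have -> : n.+1%:R *: B = (lam%:M + n.+1%:R *: B) + - lam%:M by rewrite addrAC subrr add0r.
    exact: eD.
  rewrite eZ eN e_scalar ger0_norm ?ler0n // -/L mulr2n -[2%:R]/(1 + 1) mulrDl mul1r; lra.
have h2 : E2 <= 2%:R * L + 2%:R * (n.+1%:R * e B).
  apply: le_trans (eD _ _) _; rewrite eZ e_scalar normr_nat -/L.
  have -> : (n + n).+2%:R = 2%:R * n.+1%:R :> R.
    by rewrite -natrM mul2n -addnn addSn addnS.
  rewrite -mulrA mulr2n; lra.
have hx : 4%:R * L + 10%:R * L / k < n.+1%:R * e B by rewrite -ltr_pdivrMr.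
move=> H; apply: (@num_contra k L _ _ _ k0 L0 hx h1 h2).
have Ln : 0 < L ^+ n * L ^+ n by rewrite mulr_gt0 // exprn_gt0.
have e1 : k * (L ^+ n * E1 * (L ^+ n * E1)) = (L ^+ n * L ^+ n) * (k * (E1 * E1)) by ring.
have e2 : L ^+ (n + n).+1 * E2 = (L ^+ n * L ^+ n) * (L * E2) by rewrite exprS exprD; ring.
by rewrite e1 e2 ler_pM2l in H.
Qed.


Lemma approx_contra (k eps : R) X Y : 0 < k -> X * X = 0 -> 0 < e X ->
  (forall i j, `|X i j - Y i j| < eps) -> eps <= e X / 16%:R ->
  eps <= k * e X / 80%:R -> k * (e Y * e Y) <= e (Y * Y) -> False.
Proof.
move=> k0 XX m0 hb h1 h2 H.
set D := Y - X.
have hY : Y = X + D by rewrite /D addrC subrK.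
have hd : e D < 4%:R * eps.
  rewrite /e /D !mxE.
  have := hb i0 i0; have := hb i0 i1; have := hb i1 i0; have := hb i1 i1.
  rewrite -!(distrC (X _ _)). lra.
have hYY : Y * Y = X * D + D * (X + D).
  by rewrite hY mulrDl !mulrDr XX add0r addrA.
have hYY' : e (Y * Y) <= e X * e D + e D * (e X + e D).
  rewrite hYY; apply: le_trans (eD _ _) _; apply: lerD; first exact: eM.
  apply: le_trans (eM _ _) _; apply: ler_wpM2l; first exact: e_ge0.
  exact: eD.
have hYl : e X - e D <= e Y.
  have : e X <= e Y + e (- D) by rewrite -[X in e X <= _](addrK D) -hY; apply: eD.
  rewrite eN; lra.
have d0 := e_ge0 D.
set m := e X in m0 h1 h2 hYY' hYl.
set d := e D in hd hYY' hYl d0.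
have hd1 : d <= m / 4%:R by lra.
have hd2 : d < k * m / 20%:R by lra.
have hY2 : (m - d) * (m - d) <= e Y * e Y by apply: ler_pM; lra.
nra.
Qed.

Lemma part2 (A : set 'M[R]_2) X : almost_multiplicative (semigroup_gen A) ->
  scrR A X -> ~ nilpotent X.
Proof.
move=> am [hS rX] hN.
have [Xn0 XX] := @nil_split X rX hN.
have [k [k0 Hk]] := @am_e A am.
have m0 := @e_gt0 X Xn0.
set eps := Num.min (e X / 16%:R) (k * e X / 80%:R).
have eps0 : 0 < eps by rewrite lt_min !divr_gt0 ?mulr_gt0 ?ltr0n.
have hnb : nbhs (X : ('M[R]_(2, 2) : normedModType R)) (ball (X : ('M[R]_(2, 2) : normedModType R)) eps) by apply: nbhsx_ballx.
have [Y [hY hb]] := hS _ hnb.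
case: hY => c _ [P hP hcP].
apply: (@approx_contra k eps X Y k0 XX m0).
- move=> i j; move: hb => [_ hb]; exact: hb i j.
- by rewrite ge_min lexx.
- by rewrite ge_min lexx orbT.
- rewrite -hcP -scalerAl -scalerAr scalerA !eZ normrM.
  have := Hk _ _ hP hP; have := e_ge0 P; have := e_ge0 (P * P).
  have := normr_ge0 c; nra.
Qed.

End S.

Theorem lemma3p2 (R : realType) (A : set 'M[R]_2) :
  (forall M, A M -> M \in unitmx) ->
  scrR A !=set0 ->
  almost_multiplicative (semigroup_gen A) ->
  (forall M, semigroup_gen A M -> ~ parabolic M) /\
  (forall M, scrR A M -> ~ nilpotent M).
Proof.
move=> _ _ am; split => M hM; [exact: (@part1 R A M am hM) | exact: (@part2 R A M am hM)].
Qed.
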